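(* Let $\mu>\lambda$ and let $c=(c_1,c_2)$ be a positive unit vector ($\langle c\cdot c\rangle=1$). Then there is $\eta\in\mathbb C$ with $PCT\,f_{c\,\nu,\mathbf p}=\eta\,f_{c\,\nu,\mathbf p}$ for all $\mathbf p$ if and only if there exist $\theta_1,\theta_2\in\mathbb R$ such that $$c_1=\frac{e^{\frac12\pi\nu+i\theta_1}}{\sqrt{2\sinh\pi\nu}},\qquad c_2=\frac{e^{-\frac12\pi\nu+i\theta_2}}{\sqrt{2\sinh\pi\nu}},$$ and in that case $\eta=e^{-i(\theta_1+\theta_2+\frac32\pi)}$.
   Context: Fix $\omega>0$; work in the conformal chart $(t,\mathbf x)$, $t<0$, $\mathbf x\in\mathbb R^3$, of de Sitter spacetime. Let $\mu=m/\omega$ ($m$ the mass), $\lambda>0$ the coupling constant, $\mu>\lambda$, $\nu=\sqrt{\mu^2-\lambda^2}>0$. $J_a$ denotes the Bessel function of the first kind. For $\mathbf p\in\mathbb R^3$, $p=|\mathbf p|$, let $u_{\nu,\mathbf p}(t,\mathbf x)=\sqrt{\pi/\omega}\,(2\sinh\pi\nu)^{-1/2}(2\pi)^{-3/2}(-\omega t)^{3/2}J_{i\nu}(-pt)\,e^{i\mathbf x\cdot\mathbf p}$. On $\mathbb C^2$ use $\langle c\cdot c'\rangle=c_1^*c_1'-c_2^*c_2'$. For $c=(c_1,c_2)$ set $f_{c\,\nu,\mathbf p}=c_1u_{\nu,\mathbf p}+c_2u^*_{\nu,-\mathbf p}$. Operators: $(Pf)(t,\mathbf x)=f(t,-\mathbf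 x)$; $Cf=f^*$ (antilinear); $T$ replaces $t$ by $-t$ in the explicit formulas, where the multivalued factors are continued as $(-\omega(-t))^{3/2}=e^{\frac32 i\pi}(-\omega t)^{3/2}$ and $J_a(-s)=e^{i\pi a}J_a(s)$ for $s>0$ and any index $a$ (so $J_{\pm i\nu}(-s)=e^{\mp\pi\nu}J_{\pm i\nu}(s)$), term by term in linear combinations; $PCT=P\circ C\circ T$. *)

(* Defs.v *)
From Stdlib Require Import Arith Factorial Reals Lra ClassicalEpsilon.
Open Scope R_scope.

Definition Cx : Type := (R * R)%type.
Definition RC (r : R) : Cx := (r, 0).
Definition Ci : Cx := (0, 1).
Definition Cadd (z w : Cx) : Cx := (fst z + fst w, snd z + snd w).
Definition Cmul (z w : Cx) : Cx :=
  (fst z * fst w - snd z * snd w, fst z * snd w + snd z * fst w).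
Definition Copp (z : Cx) : Cx := (- fst z, - snd z).
Definition Cconj (z : Cx) : Cx := (fst z, - snd z).
Definition Cnorm2 (z : Cx) : R := fst z ^ 2 + snd z ^ 2.
Definition Cinv (z : Cx) : Cx := (fst z / Cnorm2 z, - snd z / Cnorm2 z).
Definition Cexp (z : Cx) : Cx := (exp (fst z) * cos (snd z), exp (fst z) * sin (snd z)).
Definition Cpowr (s : R) (z : Cx) : Cx := Cexp (Cmul z (RC (ln s))).

Fixpoint Csum (f : nat -> Cx) (n : nat) : Cx :=
  match n with O => f O | S k => Cadd (Csum f k) (f (S k)) end.
Fixpoint Cprod (f : nat -> Cx) (n : nat) : Cx :=
  match n with O => f O | S k => Cmul (Cprod f k) (f (S k)) end.

Definition Ccv (u : nat -> Cx) (l : Cx) : Prop :=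
  Un_cv (fun n => fst (u n)) (fst l) /\ Un_cv (fun n => snd (u n)) (snd l).
Definition Clim (u : nat -> Cx) : Cx := epsilon (inhabits (RC 0)) (fun l => Ccv u l).

(* Euler's limit formula: Gamma(z) = lim n! n^z / (z (z+1) ... (z+n)) *)
Definition Cgamma (z : Cx) : Cx :=
  Clim (fun n => Cmul (Cmul (RC (INR (fact n))) (Cpowr (INR n) z))
                      (Cinv (Cprod (fun k => Cadd z (RC (INR k))) n))).

Definition BesselJ (a : Cx) (s : R) : Cx :=
  Clim (fun n => Csum (fun k =>
     Cmul (RC ((-1) ^ k / INR (fact k)))
          (Cmul (Cinv (Cgamma (Cadd a (RC (INR k + 1)))))
                (Cpowr (s / 2) (Cadd a (RC (2 * INR k)))))) n).

Definition R3 : Type := (R * R * R)%type.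
Definition dot3 (x y : R3) : R :=
  fst (fst x) * fst (fst y) + snd (fst x) * snd (fst y) + snd x * snd y.
Definition norm3 (p : R3) : R := sqrt (dot3 p p).
Definition neg3 (p : R3) : R3 := ((- fst (fst p), - snd (fst p)), - snd p).

Definition mu (m omega : R) : R := m / omega.
Definition nu (m omega lambda : R) : R := sqrt (mu m omega ^ 2 - lambda ^ 2).

(* fields on the chart t < 0: functions of (t, x) *)
Definition field : Type := R -> R3 -> Cx.

Definition Knorm (omega v : R) : R :=
  sqrt (PI / omega) / sqrt (2 * sinh (PI * v)) * Rpower (2 * PI) (- (3 / 2)).

Definition mode (omega : R) (kappa : Cx) (a : Cx) (q : R3) : field :=
  fun t x => Cmul (Cmul (Cmul kappa (RC (Rpower (- omega * t) (3 / 2))))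
                        (BesselJ a (- norm3 q * t)))
                  (Cexp (Cmul Ci (RC (dot3 x q)))).

(* the same formula with t replaced by -t, multivalued factors continued as
   (-omega(-t))^{3/2} = e^{3 i pi/2} (-omega t)^{3/2},  J_a(-s) = e^{i pi a} J_a(s) *)
Definition modeT (omega : R) (kappa : Cx) (a : Cx) (q : R3) : field :=
  fun t x => Cmul (Cmul (Cexp (0, 3 / 2 * PI)) (Cexp (Cmul (RC PI) (Cmul Ci a))))
                  (mode omega kappa a q t x).

Definition u (omega v : R) (p : R3) : field := mode omega (RC (Knorm omega v)) (0, v) p.
Definition ustar_neg (omega v : R) (p : R3) : field :=
  fun t x => Cconj (u omega v (neg3 p) t x).

Definition fc (omega v : R) (c : Cx * Cx) (p : R3) : field :=
  fun t x => Cadd (Cmul (fst c) (u omega v p t x)) (Cmul (snd c) (ustar_neg omega v p t x)).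

(* T f_{c nu,p}: T applied term by term to the explicit formula
   f = c1 K (-wt)^{3/2} J_{i nu}(-pt) e^{ix.p} + c2 K (-wt)^{3/2} J_{-i nu}(-pt) e^{ix.p}
   (using J_{i nu}(s)^* = J_{-i nu}(s) for s > 0 to write u^*_{nu,-p} explicitly). *)
Definition T_fc (omega v : R) (c : Cx * Cx) (p : R3) : field :=
  fun t x => Cadd (Cmul (fst c) (modeT omega (RC (Knorm omega v)) (0, v) p t x))
                  (Cmul (snd c) (modeT omega (RC (Knorm omega v)) (0, - v) p t x)).

Definition Pop (g : field) : field := fun t x => g t (neg3 x).
Definition Cop (g : field) : field := fun t x => Cconj (g t x).

Definition PCT_fc (omega v : R) (c : Cx * Cx) (p : R3) : field :=
  Pop (Cop (T_fc omega v c p)).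

Definition cdot (c c' : Cx * Cx) : Cx :=
  Cadd (Cmul (Cconj (fst c)) (fst c')) (Copp (Cmul (Cconj (snd c)) (snd c'))).

(* Main.v *)
Require Import Defs.
From Stdlib Require Import Arith Factorial Reals Lra Lia Psatz ClassicalEpsilon.
From Coquelicot Require Complex.
Open Scope R_scope.

Lemma Ceq (z w : Cx) : fst z = fst w -> snd z = snd w -> z = w.
Proof. destruct z, w; simpl; intros; subst; reflexivity. Qed.

Ltac ceq := apply Ceq; simpl.

Definition Cmod (z : Cx) : R := sqrt (Cnorm2 z).

Lemma Cmod_mul z w : Cmod (Cmul z w) = Cmod z * Cmod w.
Proof. exact (Complex.Cmod_mult z w). Qed.
Lemma Cmod_add z w : Cmod (Cadd z w) <= Cmod z + Cmod w.
Proof. exact (Complex.Cmod_triangle z w). Qed.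
Lemma Cmod_ge0 z : 0 <= Cmod z.
Proof. apply sqrt_pos. Qed.
Lemma Cmod_fst z : Rabs (fst z) <= Cmod z.
Proof. unfold Cmod, Cnorm2. rewrite <- sqrt_Rsqr_abs. apply sqrt_le_1_alt. unfold Rsqr. nra. Qed.
Lemma Cmod_snd z : Rabs (snd z) <= Cmod z.
Proof. unfold Cmod, Cnorm2. rewrite <- sqrt_Rsqr_abs. apply sqrt_le_1_alt. unfold Rsqr. nra. Qed.
Lemma Cmod_le_sum z : Cmod z <= Rabs (fst z) + Rabs (snd z).
Proof.
  unfold Cmod, Cnorm2. apply Rsqr_incr_0_var.
  - rewrite Rsqr_sqrt by nra. unfold Rsqr.
    pose proof (Rabs_pos (fst z)); pose proof (Rabs_pos (snd z)).
    assert (Ha: fst z ^2 = Rabs (fst z) * Rabs (fst z)) by (rewrite <- Rabs_mult; simpl; rewrite Rmult_1_r; symmetry; apply Rabs_pos_eq; nra).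
    assert (Hb: snd z ^2 = Rabs (snd z) * Rabs (snd z)) by (rewrite <- Rabs_mult; simpl; rewrite Rmult_1_r; symmetry; apply Rabs_pos_eq; nra).
    rewrite Ha, Hb. nra.
  - pose proof (Rabs_pos (fst z)); pose proof (Rabs_pos (snd z)); lra.
Qed.
Lemma Cmod_sq z : Cmod z * Cmod z = Cnorm2 z.
Proof. unfold Cmod. apply sqrt_sqrt. unfold Cnorm2. nra. Qed.
Lemma Cmod_eq0 z : Cmod z = 0 -> z = RC 0.
Proof. intro H. pose proof (Cmod_sq z). rewrite H in H0. unfold Cnorm2 in H0.
  ceq; nra. Qed.
Lemma Cmod_RC r : Cmod (RC r) = Rabs r.
Proof. exact (Complex.Cmod_R r). Qed.
Lemma Cmod_conj z : Cmod (Cconj z) = Cmod z.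
Proof. unfold Cmod, Cnorm2; simpl. f_equal. ring. Qed.
Lemma Cmod_opp z : Cmod (Copp z) = Cmod z.
Proof. unfold Cmod, Cnorm2; simpl. f_equal. ring. Qed.
Lemma Cmod_pos z : z <> RC 0 -> 0 < Cmod z.
Proof. intro H. destruct (Cmod_ge0 z); auto. exfalso; apply H, Cmod_eq0; auto. Qed.

Definition Csub z w := Cadd z (Copp w).
Definition Cdiv z w := Cmul z (Cinv w).

Lemma Cring : ring_theory (RC 0) (RC 1) Cadd Cmul Csub Copp (@eq Cx).
Proof.
  constructor; intros; unfold Csub; ceq; ring.
Qed.
Lemma Cfield : field_theory (RC 0) (RC 1) Cadd Cmul Csub Copp Cdiv Cinv (@eq Cx).
Proof.
  constructor.
  - exact Cring.
  - intro H. injection H. lra.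
  - reflexivity.
  - intros [a b] H.
    assert (N: a*a + b*b <> 0). { intro E. apply H. apply Ceq; simpl; nra. }
    unfold Cinv, Cnorm2; ceq; field; lra.
Qed.
Add Field Cfieldi : Cfield.

Lemma Cmul_RC a b : Cmul (RC a) (RC b) = RC (a*b).
Proof. ceq; ring. Qed.
Lemma Cadd_RC a b : Cadd (RC a) (RC b) = RC (a+b).
Proof. ceq; ring. Qed.

Lemma Cnz_of_fst z : fst z <> 0 -> z <> RC 0.
Proof. intros H E; subst; simpl in H; lra. Qed.
Lemma Cmul_nz z w : z <> RC 0 -> w <> RC 0 -> Cmul z w <> RC 0.
Proof. intros Hz Hw E. apply Cmod_pos in Hz; apply Cmod_pos in Hw.
  assert (Cmod (Cmul z w) = 0) by (rewrite E, Cmod_RC, Rabs_R0; auto).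
  rewrite Cmod_mul in H. nra. Qed.
Lemma Cinv_nz z : z <> RC 0 -> Cinv z <> RC 0.
Proof. intros H E. assert (Cmul (Cinv z) z = RC 1) by (field; auto).
  rewrite E in H0. injection H0. lra. Qed.
Lemma Cmod_inv z : z <> RC 0 -> Cmod (Cinv z) = / Cmod z.
Proof. intro H. exact (Complex.Cmod_inv z H). Qed.

Lemma conj_mul z w : Cconj (Cmul z w) = Cmul (Cconj z) (Cconj w).
Proof. ceq; ring. Qed.
Lemma conj_add z w : Cconj (Cadd z w) = Cadd (Cconj z) (Cconj w).
Proof. ceq; ring. Qed.
Lemma conj_RC r : Cconj (RC r) = RC r.
Proof. ceq; ring. Qed.
Lemma conj_inv z : Cconj (Cinv z) = Cinv (Cconj z).
Proof. unfold Cinv, Cnorm2; ceq; replace (- snd z * (- snd z * 1)) with (snd z * (snd z*1)) by ring; [reflexivity| unfold Rdiv; ring]. Qed.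
Lemma conj_conj z : Cconj (Cconj z) = z.
Proof. ceq; ring. Qed.

Lemma Cexp_add z w : Cexp (Cadd z w) = Cmul (Cexp z) (Cexp w).
Proof. unfold Cexp; ceq; rewrite exp_plus, ?cos_plus, ?sin_plus; ring. Qed.
Lemma Cexp_conj z : Cconj (Cexp z) = Cexp (Cconj z).
Proof. unfold Cexp; ceq; rewrite ?cos_neg, ?sin_neg; ring. Qed.
Lemma Cmod_Cexp z : Cmod (Cexp z) = exp (fst z).
Proof. unfold Cmod, Cnorm2, Cexp; cbn [fst snd].
  replace ((exp (fst z) * cos (snd z))^2 + (exp (fst z) * sin (snd z))^2) with (exp (fst z) ^2)
    by (pose proof (sin2_cos2 (snd z)) as HH; unfold Rsqr in HH; rewrite <- (Rmult_1_r (exp (fst z) ^2)), <- HH; ring).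
  rewrite sqrt_pow2; auto. left; apply exp_pos. Qed.
Lemma Cexp_nz z : Cexp z <> RC 0.
Proof. intro E. pose proof (Cmod_Cexp z). rewrite E, Cmod_RC, Rabs_R0 in H.
  pose proof (exp_pos (fst z)); lra. Qed.
Lemma Cexp_real r : Cexp (r, 0) = RC (exp r).
Proof. unfold Cexp; ceq; rewrite ?cos_0, ?sin_0; ring. Qed.

Lemma Clim_eq u l : Ccv u l -> Clim u = l.
Proof.
  intro H. unfold Clim.
  assert (E : exists l, Ccv u l) by eauto.
  pose proof (epsilon_spec (inhabits (RC 0)) (fun l => Ccv u l) E) as H2.
  simpl in H2. destruct H as [H1 H3], H2 as [H4 H5].
  apply Ceq.
  - eapply UL_sequence; eauto.
  - eapply UL_sequence; eauto.
Qed.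

Lemma Ccv_of_mod u l :
  (forall eps, 0 < eps -> exists N, forall n, (n >= N)%nat -> Cmod (Csub (u n) l) < eps) -> Ccv u l.
Proof.
  intro H. split; intros eps Heps; destruct (H eps Heps) as [N HN]; exists N; intros n Hn;
  specialize (HN n Hn); unfold R_dist, Rminus in *.
  - pose proof (Cmod_fst (Csub (u n) l)). simpl in H0. lra.
  - pose proof (Cmod_snd (Csub (u n) l)). simpl in H0. lra.
Qed.

Lemma Ccv_mod u l : Ccv u l ->
  forall eps, 0 < eps -> exists N, forall n, (n >= N)%nat -> Cmod (Csub (u n) l) < eps.
Proof.
  intros [H1 H2] eps Heps.
  destruct (H1 (eps/2)) as [N1 HN1]; [lra|].
  destruct (H2 (eps/2)) as [N2 HN2]; [lra|].
  exists (max N1 N2). intros n Hn.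
  specialize (HN1 n ltac:(lia)). specialize (HN2 n ltac:(lia)). unfold R_dist, Rminus in *.
  pose proof (Cmod_le_sum (Csub (u n) l)). simpl in H. lra.
Qed.

Lemma Ccv_ext u w l N : (forall n, (n >= N)%nat -> u n = w n) -> Ccv u l -> Ccv w l.
Proof.
  intros E H. apply Ccv_of_mod. intros eps Heps.
  destruct (Ccv_mod u l H eps Heps) as [M HM]. exists (max N M). intros n Hn.
  rewrite <- E by lia. apply HM. lia.
Qed.

Lemma Ccv_shift u l N : Ccv (fun n => u (n + N)%nat) l -> Ccv u l.
Proof.
  intros H. apply Ccv_of_mod. intros eps Heps.
  destruct (Ccv_mod _ l H eps Heps) as [M HM]. exists (M + N)%nat. intros n Hn.
  replace n with ((n - N) + N)%nat by lia. apply HM. lia.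
Qed.

Lemma Ccv_mul u w l k : Ccv u l -> Ccv w k -> Ccv (fun n => Cmul (u n) (w n)) (Cmul l k).
Proof.
  intros [H1 H2] [H3 H4]. split; simpl.
  - apply CV_minus; apply CV_mult; auto.
  - apply CV_plus; apply CV_mult; auto.
Qed.

Lemma Ccv_const c : Ccv (fun _ => c) c.
Proof. split; intros eps H; exists 0%nat; intros; unfold R_dist; rewrite Rminus_diag, Rabs_R0; auto. Qed.

Lemma Ccv_conj u l : Ccv u l -> Ccv (fun n => Cconj (u n)) (Cconj l).
Proof. intros [H1 H2]; split; simpl; auto. apply CV_opp; auto. Qed.

Lemma Ccv_cauchy u :
  (forall eps, 0 < eps -> exists N, forall n m, (n >= N)%nat -> (m >= N)%nat -> Cmod (Csub (u n) (u m)) < eps) ->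
  exists l, Ccv u l.
Proof.
  intro H.
  assert (C1 : Cauchy_crit (fun n => fst (u n))).
  { intros eps Heps. destruct (H eps Heps) as [N HN]. exists N. intros n m Hn Hm.
    specialize (HN n m Hn Hm). pose proof (Cmod_fst (Csub (u n) (u m))). simpl in H0.
    unfold R_dist, Rminus in *. lra. }
  assert (C2 : Cauchy_crit (fun n => snd (u n))).
  { intros eps Heps. destruct (H eps Heps) as [N HN]. exists N. intros n m Hn Hm.
    specialize (HN n m Hn Hm). pose proof (Cmod_snd (Csub (u n) (u m))). simpl in H0.
    unfold R_dist, Rminus in *. lra. }
  destruct (R_complete _ C1) as [l1 H1]. destruct (R_complete _ C2) as [l2 H2].
  exists (l1, l2). split; auto.
Qed.

Lemma Ccv_mod_ge u l c N : Ccv u l -> (forall n, (n >= N)%nat -> c <= Cmod (u n)) -> c <= Cmod l.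
Proof.
  intros H Hc. apply Rnot_lt_le. intro Hlt.
  destruct (Ccv_mod u l H (c - Cmod l)) as [M HM]; [lra|].
  specialize (HM (max N M) ltac:(lia)). specialize (Hc (max N M) ltac:(lia)).
  pose proof (Cmod_add (Csub (u (max N M)) l) l).
  replace (Cadd (Csub (u (max N M)) l) l) with (u (max N M)) in H0 by (unfold Csub; ceq; ring).
  lra.
Qed.

Lemma Ccv_mod_le u l a c N : Ccv u l -> (forall n, (n >= N)%nat -> Cmod (Csub (u n) a) <= c) -> Cmod (Csub l a) <= c.
Proof.
  intros H Hc. apply Rnot_lt_le. intro Hlt.
  destruct (Ccv_mod u l H (Cmod (Csub l a) - c)) as [M HM]; [lra|].
  specialize (HM (max N M) ltac:(lia)). specialize (Hc (max N M) ltac:(lia)).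
  pose proof (Cmod_add (Csub l (u (max N M))) (Csub (u (max N M)) a)).
  replace (Cadd (Csub l (u (max N M))) (Csub (u (max N M)) a)) with (Csub l a) in H0 by (unfold Csub; ceq; ring).
  replace (Csub l (u (max N M))) with (Copp (Csub (u (max N M)) l)) in H0 by (unfold Csub; ceq; ring).
  rewrite Cmod_opp in H0. lra.
Qed.

Lemma Cmod_sub_sym z w : Cmod (Csub z w) = Cmod (Csub w z).
Proof. replace (Csub z w) with (Copp (Csub w z)) by (unfold Csub; ceq; ring). apply Cmod_opp. Qed.

Lemma Cmod_tri3 z w y : Cmod (Csub z y) <= Cmod (Csub z w) + Cmod (Csub w y).
Proof. replace (Csub z y) with (Cadd (Csub z w) (Csub w y)) by (unfold Csub; ceq; ring). apply Cmod_add. Qed.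

Lemma Cmod_upper z : Cmod z <= 1 + Cmod (Csub z (RC 1)).
Proof. pose proof (Cmod_tri3 z (RC 1) (RC 0)).
  replace (Csub z (RC 0)) with z in H by (unfold Csub; ceq; ring).
  replace (Csub (RC 1) (RC 0)) with (RC 1) in H by (unfold Csub; ceq; ring).
  rewrite Cmod_RC, Rabs_R1 in H. lra. Qed.

Lemma Cmod_lower z : 1 - Cmod (Csub z (RC 1)) <= Cmod z.
Proof. pose proof (Cmod_tri3 (RC 1) z (RC 0)).
  replace (Csub z (RC 0)) with z in H by (unfold Csub; ceq; ring).
  replace (Csub (RC 1) (RC 0)) with (RC 1) in H by (unfold Csub; ceq; ring).
  rewrite Cmod_RC, Rabs_R1, Cmod_sub_sym in H. lra. Qed.

Lemma small_inv C x : 0 < x -> exists N, forall n, (n >= N)%nat -> C / (INR n + 1) < x.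
Proof.
  intro Hx. destruct (INR_unbounded (C / x)) as [N HN]. exists N. intros n Hn.
  apply le_INR in Hn. pose proof (pos_INR N).
  apply Rmult_lt_reg_r with (INR n + 1); [lra|].
  unfold Rdiv. rewrite Rmult_assoc, Rinv_l by lra. rewrite Rmult_1_r.
  assert (C / x * x = C) by (field; lra).
  apply Rle_lt_trans with (C / x * x); [lra|]. apply Rmult_lt_compat_l with (r := x) in HN; auto. nra.
Qed.

Section Prod.
Variables (W rho : nat -> Cx) (C : R).
Hypothesis HC : 0 <= C.
Hypothesis Hrec : forall k, W (S k) = Cmul (W k) (rho k).
Hypothesis Hb : forall k, Cmod (Csub (rho k) (RC 1)) <= C / ((INR k + 1) * (INR k + 2)).
Hypothesis Hnz : forall k, W k <> RC 0.

Let T k := C - C / (INR k + 1).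
Let e k := C / ((INR k + 1) * (INR k + 2)).

Lemma T_S k : T (S k) = T k + e k.
Proof. unfold T, e. rewrite S_INR. pose proof (pos_INR k). field. lra. Qed.
Lemma e_nn k : 0 <= e k.
Proof. unfold e. pose proof (pos_INR k). apply Rmult_le_pos; auto. left; apply Rinv_0_lt_compat; nra. Qed.
Lemma T_le k : T k <= C.
Proof. unfold T. pose proof (pos_INR k). assert (0 <= C / (INR k + 1)) by (apply Rmult_le_pos; auto; left; apply Rinv_0_lt_compat; lra). lra. Qed.
Lemma T_nn k : 0 <= T k.
Proof. unfold T. pose proof (pos_INR k). assert (C / (INR k + 1) <= C).
  { unfold Rdiv. rewrite <- (Rmult_1_r C) at 2. apply Rmult_le_compat_l; auto.
    rewrite <- Rinv_1. apply Rinv_le_contravar; lra. } lra. Qed.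

Let B := Cmod (W 0%nat) * exp C.

Lemma W_upper k : Cmod (W k) <= Cmod (W 0%nat) * exp (T k).
Proof.
  induction k.
  - assert (T 0%nat = 0) by (unfold T; simpl; field). rewrite H, exp_0, Rmult_1_r. lra.
  - rewrite Hrec, Cmod_mul, T_S, exp_plus.
    pose proof (Cmod_upper (rho k)). pose proof (Hb k). fold (e k) in H0.
    pose proof (exp_ineq1_le (e k)). pose proof (Cmod_ge0 (W k)). pose proof (Cmod_ge0 (rho k)).
    pose proof (exp_pos (T k)). pose proof (Cmod_ge0 (W 0%nat)).
    apply Rle_trans with (Cmod (W k) * (1 + e k)).
    + apply Rmult_le_compat_l; lra.
    + rewrite <- Rmult_assoc. apply Rmult_le_compat; lra.
Qed.

Lemma W_B k : Cmod (W k) <= B.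
Proof. eapply Rle_trans; [apply W_upper|]. unfold B. apply Rmult_le_compat_l; [apply Cmod_ge0|].
  destruct (Req_dec (T k) C) as [E|E]; [rewrite E; lra|]. left; apply exp_increasing. pose proof (T_le k); lra. Qed.

Lemma W_diff m d : Cmod (Csub (W (d + m)%nat) (W m)) <= B * (T (d + m)%nat - T m).
Proof.
  induction d.
  - simpl. replace (Csub (W m) (W m)) with (RC 0) by (unfold Csub; ceq; ring). rewrite Cmod_RC, Rabs_R0. lra.
  - eapply Rle_trans; [apply (Cmod_tri3 _ (W (d + m)%nat))|].
    replace (S d + m)%nat with (S (d + m)) by lia. rewrite T_S.
    rewrite Hrec. replace (Csub (Cmul (W (d + m)%nat) (rho (d + m)%nat)) (W (d + m)%nat))
      with (Cmul (W (d + m)%nat) (Csub (rho (d + m)%nat) (RC 1))) by (unfold Csub; ceq; ring).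
    rewrite Cmod_mul. pose proof (Hb (d+m)%nat). fold (e (d+m)%nat) in H.
    pose proof (W_B (d+m)). pose proof (Cmod_ge0 (W (d+m)%nat)). pose proof (Cmod_ge0 (Csub (rho (d + m)%nat) (RC 1))).
    pose proof (e_nn (d+m)).
    assert (Cmod (W (d + m)%nat) * Cmod (Csub (rho (d + m)%nat) (RC 1)) <= B * e (d+m)%nat) by (apply Rmult_le_compat; lra).
    lra.
Qed.

Lemma W_lower k0 d : C / (INR k0 + 1) <= 1/2 ->
  Cmod (W k0) * (1 - (T (d + k0)%nat - T k0)) <= Cmod (W (d + k0)%nat).
Proof.
  intro Hk0. induction d.
  - simpl. lra.
  - replace (S d + k0)%nat with (S (d + k0)) by lia. rewrite T_S, Hrec, Cmod_mul.
    pose proof (Cmod_lower (rho (d + k0)%nat)). pose proof (Hb (d+k0)%nat). fold (e (d+k0)%nat) in H0.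
    assert (e (d + k0)%nat <= 1/2).
    { unfold e. rewrite plus_INR. pose proof (pos_INR d). pose proof (pos_INR k0).
      apply Rle_trans with (C / (INR k0 + 1)); auto.
      unfold Rdiv. apply Rmult_le_compat_l; auto. apply Rinv_le_contravar; nra. }
    assert (T (d + k0)%nat - T k0 <= 1/2).
    { unfold T. rewrite plus_INR. pose proof (pos_INR d). pose proof (pos_INR k0).
      assert (0 <= C / (INR d + INR k0 + 1)) by (apply Rmult_le_pos; auto; left; apply Rinv_0_lt_compat; lra). lra. }
    assert (0 <= T (d + k0)%nat - T k0).
    { unfold T. rewrite plus_INR. pose proof (pos_INR d). pose proof (pos_INR k0).
      assert (C / (INR d + INR k0 + 1) <= C / (INR k0 + 1)) by (unfold Rdiv; apply Rmult_le_compat_l; auto; apply Rinv_le_contravar; lra). lra. }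
    pose proof (Cmod_ge0 (W k0)). pose proof (e_nn (d + k0)%nat).
    apply Rle_trans with (Cmod (W (d + k0)%nat) * (1 - e (d + k0)%nat)).
    + apply Rle_trans with (Cmod (W k0) * (1 - (T (d + k0)%nat - T k0)) * (1 - e (d + k0)%nat)).
      * assert (0 <= Cmod (W k0) * ((T (d + k0)%nat - T k0) * e (d + k0)%nat)) by (apply Rmult_le_pos; [|apply Rmult_le_pos]; lra).
        ring_simplify. ring_simplify in H5. lra.
      * apply Rmult_le_compat_r; lra.
    + apply Rmult_le_compat_l; [apply Cmod_ge0|]. lra.
Qed.

Lemma prod_conv : exists L, L <> RC 0 /\ Ccv W L.
Proof.
  assert (HB : 0 <= B) by (unfold B; pose proof (Cmod_ge0 (W 0%nat)); pose proof (exp_pos C); nra).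
  destruct (Ccv_cauchy W) as [L HL].
  { intros eps Heps.
    destruct (small_inv (B * C) eps Heps) as [N HN]. exists N. intros n m Hn Hm.
    assert (forall n m, (n >= N)%nat -> (m >= N)%nat -> (n >= m)%nat -> Cmod (Csub (W n) (W m)) < eps).
    { clear n m Hn Hm. intros n m Hn Hm Hnm.
      replace n with ((n - m) + m)%nat by lia.
      eapply Rle_lt_trans; [apply W_diff|].
      unfold T. replace (n - m + m)%nat with n by lia.
      eapply Rle_lt_trans; [|apply (HN m Hm)].
      pose proof (pos_INR n); pose proof (pos_INR m).
      assert (0 <= C / (INR n + 1)) by (apply Rmult_le_pos; auto; left; apply Rinv_0_lt_compat; lra).
      replace (B * C / (INR m + 1)) with (B * (C / (INR m + 1))) by (unfold Rdiv; ring).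
      apply Rmult_le_compat_l; auto. lra. }
    destruct (Compare_dec.le_lt_dec m n).
    - apply H; auto.
    - rewrite Cmod_sub_sym. apply H; auto; lia. }
  exists L. split; auto.
  destruct (small_inv C (1/2)) as [k0 Hk0]; [lra|].
  specialize (Hk0 k0 (le_n _)).
  assert (Hlow : forall n, (n >= k0)%nat -> Cmod (W k0) / 2 <= Cmod (W n)).
  { intros n Hn. replace n with ((n - k0) + k0)%nat by lia.
    eapply Rle_trans; [|apply W_lower; lra].
    assert (T (n - k0 + k0)%nat - T k0 <= 1/2).
    { unfold T. rewrite plus_INR. pose proof (pos_INR (n-k0)). pose proof (pos_INR k0).
      assert (0 <= C / (INR (n-k0) + INR k0 + 1)) by (apply Rmult_le_pos; auto; left; apply Rinv_0_lt_compat; lra). lra. }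
    pose proof (Cmod_ge0 (W k0)). nra. }
  pose proof (Ccv_mod_ge W L _ k0 HL Hlow).
  pose proof (Cmod_pos _ (Hnz k0)).
  intro E. rewrite E, Cmod_RC, Rabs_R0 in H. lra.
Qed.
End Prod.

Definition ES (z : Cx) (n : nat) : Cx :=
  Cmul (Cmul (RC (INR (fact n))) (Cpowr (INR n) z)) (Cinv (Cprod (fun k => Cadd z (RC (INR k))) n)).

Lemma Cgamma_ES z : Cgamma z = Clim (ES z).
Proof. reflexivity. Qed.

Lemma Cprod_nz z n : 0 < fst z -> Cprod (fun k => Cadd z (RC (INR k))) n <> RC 0.
Proof.
  intro H. induction n; cbn [Cprod].
  - apply Cnz_of_fst. simpl. lra.
  - apply Cmul_nz; auto. apply Cnz_of_fst. unfold Cadd, RC; cbn [fst]. pose proof (pos_INR (S n)). lra.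
Qed.

Lemma Cpowr_nz s z : Cpowr s z <> RC 0.
Proof. apply Cexp_nz. Qed.

Lemma fact_nz n : RC (INR (fact n)) <> RC 0.
Proof. apply Cnz_of_fst. simpl. apply not_0_INR. apply fact_neq_0. Qed.

Lemma ES_nz z n : 0 < fst z -> ES z n <> RC 0.
Proof.
  intro H. unfold ES. apply Cmul_nz; [apply Cmul_nz|apply Cinv_nz].
  - apply fact_nz.
  - apply Cpowr_nz.
  - apply Cprod_nz; auto.
Qed.

Lemma Cpowr_conj s z : Cpowr s (Cconj z) = Cconj (Cpowr s z).
Proof. unfold Cpowr. rewrite Cexp_conj. f_equal. ceq; ring. Qed.

Lemma ES_conj z n : ES (Cconj z) n = Cconj (ES z n).
Proof.
  unfold ES. rewrite !conj_mul, conj_inv, conj_RC, Cpowr_conj. do 2 f_equal.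
  induction n; cbn [Cprod].
  - rewrite conj_add, conj_RC; auto.
  - rewrite conj_mul, IHn, conj_add, conj_RC; auto.
Qed.

Lemma Cprod_shift z n :
  Cmul (Cprod (fun k => Cadd (Cadd z (RC 1)) (RC (INR k))) n) z =
  Cmul (Cprod (fun k => Cadd z (RC (INR k))) n) (Cadd z (RC (INR n + 1))).
Proof.
  induction n; cbn [Cprod].
  - simpl INR. ceq; ring.
  - rewrite S_INR.
    transitivity (Cmul (Cmul (Cprod (fun k : nat => Cadd (Cadd z (RC 1)) (RC (INR k))) n) z)
                       (Cadd (Cadd z (RC 1)) (RC (INR n + 1)))); [ceq; ring|].
    rewrite IHn. ceq; ring.
Qed.

Lemma Cpowr_add1 n z : (n >= 1)%nat -> Cpowr (INR n) (Cadd z (RC 1)) = Cmul (Cpowr (INR n) z) (RC (INR n)).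
Proof.
  intro Hn. unfold Cpowr.
  replace (Cmul (Cadd z (RC 1)) (RC (ln (INR n)))) with (Cadd (Cmul z (RC (ln (INR n)))) (ln (INR n), 0))
    by (ceq; ring).
  rewrite Cexp_add, Cexp_real, exp_ln; auto. apply lt_0_INR; lia.
Qed.

Lemma ES_succ_arg z n : (n >= 1)%nat -> 0 < fst z ->
  ES (Cadd z (RC 1)) n = Cmul (Cmul z (ES z n)) (Cmul (RC (INR n)) (Cinv (Cadd z (RC (INR n + 1))))).
Proof.
  intros Hn Hz. unfold ES. rewrite Cpowr_add1 by auto.
  pose proof (Cprod_shift z n).
  assert (Hp : Cprod (fun k => Cadd z (RC (INR k))) n <> RC 0) by (apply Cprod_nz; auto).
  assert (Hz0 : z <> RC 0) by (apply Cnz_of_fst; lra).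
  assert (Hq : Cadd z (RC (INR n + 1)) <> RC 0) by (apply Cnz_of_fst; simpl; pose proof (pos_INR n); lra).
  assert (Hp' : Cprod (fun k => Cadd (Cadd z (RC 1)) (RC (INR k))) n <> RC 0) by (apply Cprod_nz; simpl; lra).
  assert (E : Cprod (fun k => Cadd (Cadd z (RC 1)) (RC (INR k))) n =
              Cdiv (Cmul (Cprod (fun k => Cadd z (RC (INR k))) n) (Cadd z (RC (INR n + 1)))) z).
  { rewrite <- H. unfold Cdiv. field. auto. }
  rewrite E. unfold Cdiv. field. repeat split; auto.
Qed.

Lemma ES_ratio z n : 0 < fst z ->
  ES z (S n) = Cmul (ES z n) (Cmul (RC (INR n + 1))
     (Cmul (Cexp (Cmul z (RC (ln (INR n + 1) - ln (INR n))))) (Cinv (Cadd z (RC (INR n + 1)))))).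
Proof.
  intro Hz. unfold ES. cbn [Cprod]. rewrite fact_simpl, mult_INR, S_INR.
  unfold Cpowr at 1.
  replace (Cmul z (RC (ln (INR n + 1)))) with (Cadd (Cmul z (RC (ln (INR n)))) (Cmul z (RC (ln (INR n + 1) - ln (INR n))))) by (ceq; ring).
  rewrite Cexp_add. fold (Cpowr (INR n) z).
  assert (Hp : Cprod (fun k => Cadd z (RC (INR k))) n <> RC 0) by (apply Cprod_nz; auto).
  assert (Hq : Cadd z (RC (INR n + 1)) <> RC 0) by (apply Cnz_of_fst; unfold Cadd, RC; cbn [fst]; pose proof (pos_INR n); lra).
  replace (RC ((INR n + 1) * INR (fact n))) with (Cmul (RC (INR n + 1)) (RC (INR (fact n)))) by (ceq; ring).
  field. split; auto.
Qed.
Lemma sin_lb_ge x : 0 <= x <= 1 -> x - x^2 <= sin x.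
Proof. intro H. assert (x <= PI) by (pose proof PI2_3_2; lra).
  destruct (sin_bound x 0) as [H1 _]; try lra.
  unfold sin_approx, sin_term in H1. simpl in H1.
  eapply Rle_trans; [|apply H1].
  replace (1 + 1 + 1 + 1 + 1 + 1) with 6 in * by ring.
  assert (x*(x*(x*1)) <= x * x) by nra. unfold Rdiv. nra.
Qed.
Lemma cos_lb_ge x : 0 <= x <= 1 -> 1 - x^2/2 <= cos x.
Proof. intro H. replace x with (2 * (x/2)) at 2 by field. rewrite cos_2a_sin.
  assert (0 <= sin (x/2)) by (apply sin_ge_0; pose proof PI2_3_2; lra).
  assert (sin (x/2) <= x/2). { destruct (Req_dec x 0). subst. replace (0/2) with 0 by field. rewrite sin_0; lra. left. apply sin_lt_x. lra. }
  nra.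
Qed.
Lemma sin_le x : 0 <= x -> sin x <= x.
Proof. intro. destruct (Req_dec x 0). subst; rewrite sin_0; lra. left; apply sin_lt_x; lra. Qed.
Lemma XY_bound a v h c s : 1 <= a -> 0 < v -> v <= a -> / (a+1) <= h -> h <= / a ->
  1 - (v*h)^2/2 <= c -> c <= 1 -> v*h - (v*h)^2 <= s -> s <= v*h ->
  Rabs ((a+1)*((a+1)/a) * c - (a+2)) + Rabs ((a+1)*((a+1)/a) * s - v) <= (a+2)*(3*v^2+2*v+1) / a^2.
Proof.
  intros Ha Hv Hva Hh1 Hh2 Hc1 Hc2 Hs1 Hs2.
  set (q := (a+1)*((a+1)/a)).
  assert (Hq : q = a + 2 + /a) by (unfold q; field; lra).
  assert (Hia : 0 < /a) by (apply Rinv_0_lt_compat; lra).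
  assert (Hia1 : /a <= 1) by (rewrite <- Rinv_1; apply Rinv_le_contravar; lra).
  set (p := v*h) in *.
  assert (Hp1 : p <= v * /a) by (unfold p; apply Rmult_le_compat_l; lra).
  assert (Hp0 : v * /(a+1) <= p) by (unfold p; apply Rmult_le_compat_l; lra).
  assert (Hai : a * /a = 1) by (field; lra).
  assert (Ha1i : (a+1) * /(a+1) = 1) by (field; lra).
  assert (Hia1p : 0 < /(a+1)) by (apply Rinv_0_lt_compat; lra).
  assert (Hp2 : p^2 <= v^2 * (/a)^2) by (assert (0 <= p) by nra; nra).
  set (w := /a) in *.
  replace ((a+2)*(3*v^2+2*v+1)/a^2) with ((a+2)*(3*v^2+2*v+1)*w^2) by (unfold w; field; lra).
  assert (HX : Rabs (q * c - (a+2)) <= w + (a+2)*v^2*w^2).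
  { rewrite Hq. apply Rabs_le. split.
    - assert ((a + 2 + w) * c >= (a+2+w)*(1 - p^2/2)) by (apply Rle_ge, Rmult_le_compat_l; lra).
      assert ((a+2+w)*p^2/2 <= (a+2)*v^2*w^2).
      { assert ((a+2+w)/2 <= a+2) by lra.
        assert (0 <= p^2) by nra.
        apply Rle_trans with ((a+2)*p^2); [nra|]. assert (0 <= a+2) by lra. nra. }
      nra.
    - assert ((a + 2 + w) * c <= (a+2+w)) by (rewrite <- (Rmult_1_r (a+2+w)) at 2; apply Rmult_le_compat_l; lra).
      assert (0 <= (a+2)*v^2*w^2) by (apply Rmult_le_pos; [|nra]; nra).
      lra. }
  assert (HY : Rabs (q * s - v) <= v*(2*a+1)*w^2 + 2*(a+2)*v^2*w^2).
  { apply Rabs_le. split.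
    - assert (q * s >= q * (p - p^2)) by (apply Rle_ge, Rmult_le_compat_l; [rewrite Hq; lra|lra]).
      assert (q * p >= v) .
      { unfold q. apply Rle_ge. apply Rle_trans with ((a+1)*((a+1)/a)*(v * /(a+1))); [|apply Rmult_le_compat_l; [|lra]].
        - replace ((a + 1) * ((a + 1) / a) * (v * / (a + 1))) with (v * ((a+1)*w)) by (unfold w; field; lra).
          assert ((a+1)*w >= 1) by (assert ((a+1)*w = 1 + w) by (unfold w; field; lra); lra).
          nra.
        - apply Rmult_le_pos; [lra|]. unfold Rdiv; apply Rmult_le_pos; [lra|left; apply Rinv_0_lt_compat; lra]. }
      assert (q * p^2 <= 2*(a+2)*v^2*w^2).
      { rewrite Hq. apply Rle_trans with (2*(a+2)*p^2); [assert (0<=p^2) by nra; nra|].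
        assert (0 <= 2*(a+2)) by lra. nra. }
      assert (0 <= v*(2*a+1)*w^2) by (apply Rmult_le_pos; [nra|nra]).
      nra.
    - assert (q * s <= q * p) by (apply Rmult_le_compat_l; [rewrite Hq; lra|lra]).
      assert (q * p <= q * (v*w)) by (apply Rmult_le_compat_l; [rewrite Hq; lra|lra]).
      assert (q * (v*w) - v = v*(2*a+1)*w^2) by (rewrite Hq; unfold w; field; lra).
      assert (0 <= 2*(a+2)*v^2*w^2) by (apply Rmult_le_pos; nra).
      lra. }
  assert (v*(2*a+1)*w^2 <= 2*(a+2)*v*w^2) by (assert (0 <= v*w^2) by nra; nra).
  assert (w <= (a+2)*w^2) by (assert ((a+2)*w^2 = w * ((a+2)*w)) by ring; assert ((a+2)*w >= 1) by (assert ((a+2)*w = 1 + 2*w) by (unfold w; field; lra); lra); nra).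
  nra.
Qed.

Lemma ln_gap a : 1 <= a -> / (a+1) <= ln (a+1) - ln a <= / a.
Proof.
  intro Ha. set (h := ln (a+1) - ln a).
  assert (E : exp h = (a+1) / a).
  { unfold h. unfold Rminus. rewrite exp_plus, exp_Ropp, !exp_ln by lra. reflexivity. }
  assert (E2 : exp (-h) = a / (a+1)).
  { rewrite exp_Ropp, E. field. lra. }
  pose proof (exp_ineq1_le h). pose proof (exp_ineq1_le (-h)).
  split.
  - replace (/ (a+1)) with (1 - a/(a+1)) by (field; lra). lra.
  - replace (/a) with ((a+1)/a - 1) by (field; lra). lra.
Qed.

Definition z0 (v : R) : Cx := (1, v).

Lemma rho_bound v n : 0 < v -> 1 <= INR n -> v <= INR n ->
  Cmod (Csub (Cmul (RC (INR n + 1)) (Cmul (Cexp (Cmul (z0 v) (RC (ln (INR n + 1) - ln (INR n)))))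
       (Cinv (Cadd (z0 v) (RC (INR n + 1)))))) (RC 1)) <= (3*v^2+2*v+1) / INR n ^ 2.
Proof.
  intros Hv Ha Hva. set (a := INR n) in *. set (h := ln (a + 1) - ln a).
  destruct (ln_gap a Ha) as [Hh1 Hh2]. fold h in Hh1, Hh2.
  assert (Hvh : 0 <= v * h <= 1).
  { split. apply Rmult_le_pos; [lra|]. assert (0 < /(a+1)) by (apply Rinv_0_lt_compat; lra). lra.
    apply Rle_trans with (v * /a). apply Rmult_le_compat_l; lra.
    apply Rmult_le_reg_r with a; [lra|]. rewrite Rmult_assoc, Rinv_l by lra. lra. }
  set (D := Cadd (z0 v) (RC (a + 1))).
  assert (HD : D <> RC 0) by (apply Cnz_of_fst; unfold D, z0, Cadd, RC; cbn [fst]; lra).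
  set (Ex := Cexp (Cmul (z0 v) (RC h))).
  assert (HE : Ex = ((a+1)/a * cos (v*h), (a+1)/a * sin (v*h))).
  { unfold Ex. replace (Cmul (z0 v) (RC h)) with (h, v*h) by (unfold z0; ceq; ring).
    unfold Cexp; cbn [fst snd].
    assert (exp h = (a+1)/a) by (unfold h, Rminus; rewrite exp_plus, exp_Ropp, !exp_ln by lra; reflexivity).
    rewrite H; reflexivity. }
  replace (Csub (Cmul (RC (a + 1)) (Cmul Ex (Cinv D))) (RC 1))
    with (Cmul (Csub (Cmul (RC (a+1)) Ex) D) (Cinv D)) by (field; auto).
  rewrite Cmod_mul, Cmod_inv by auto.
  assert (HN : Csub (Cmul (RC (a+1)) Ex) D = ((a+1)*((a+1)/a) * cos (v*h) - (a+2), (a+1)*((a+1)/a) * sin (v*h) - v))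
    by (rewrite HE; unfold D, z0; ceq; ring).
  rewrite HN.
  pose proof (Cmod_le_sum ((a+1)*((a+1)/a) * cos (v*h) - (a+2), (a+1)*((a+1)/a) * sin (v*h) - v)) as H.
  cbn [fst snd] in H.
  pose proof (XY_bound a v h (cos (v*h)) (sin (v*h)) Ha Hv Hva Hh1 Hh2
     (cos_lb_ge _ Hvh) (proj2 (COS_bound (v*h))) (sin_lb_ge _ Hvh) (sin_le _ (proj1 Hvh))).
  assert (H1 : a + 2 <= Cmod D).
  { pose proof (Cmod_fst D) as T. replace (fst D) with (a+2) in T by (unfold D, z0, Cadd, RC; cbn [fst]; ring).
    rewrite Rabs_pos_eq in T; lra. }
  assert (Hc: 0 <= (3*v^2+2*v+1)/a^2) by (apply Rmult_le_pos; [nra|]; left; apply Rinv_0_lt_compat; nra).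
  apply Rle_trans with (((a + 2) * (3 * v ^ 2 + 2 * v + 1) / a ^ 2) * / Cmod D).
  - apply Rmult_le_compat_r; [left; apply Rinv_0_lt_compat; lra|]. lra.
  - replace ((a + 2) * (3 * v ^ 2 + 2 * v + 1) / a ^ 2) with ((a+2) * ((3 * v ^ 2 + 2 * v + 1) / a ^ 2)) by (unfold Rdiv; ring).
    rewrite Rmult_comm, <- Rmult_assoc.
    rewrite <- (Rmult_1_l ((3 * v ^ 2 + 2 * v + 1) / a ^ 2)) at 2.
    apply Rmult_le_compat_r; auto.
    apply Rmult_le_reg_l with (Cmod D); [lra|]. rewrite <- Rmult_assoc, Rinv_r by lra. lra.
Qed.

Lemma gamma0_exists v : 0 < v -> exists L, L <> RC 0 /\ Ccv (ES (z0 v)) L.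
Proof.
  intro Hv. destruct (INR_unbounded v) as [N1 HN1]. set (N := (N1 + 2)%nat).
  assert (HN : 2 <= INR N /\ v <= INR N).
  { unfold N. rewrite plus_INR. simpl. pose proof (pos_INR N1). lra. }
  set (W := fun k => ES (z0 v) (k + N)).
  set (rho := fun k => Cmul (RC (INR (k + N) + 1)) (Cmul (Cexp (Cmul (z0 v) (RC (ln (INR (k + N) + 1) - ln (INR (k + N))))))
       (Cinv (Cadd (z0 v) (RC (INR (k + N) + 1)))))).
  destruct (prod_conv W rho (3*v^2+2*v+1)) as [L [HL1 HL2]].
  - nra.
  - intro k. unfold W, rho. replace (S k + N)%nat with (S (k + N)) by lia.
    apply ES_ratio. unfold z0; simpl; lra.
  - intro k. unfold rho. eapply Rle_trans; [apply rho_bound; auto; rewrite plus_INR; pose proof (pos_INR k); lra|].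
    unfold Rdiv. apply Rmult_le_compat_l; [nra|]. rewrite plus_INR.
    pose proof (pos_INR k). apply Rinv_le_contravar; nra.
  - intro k. apply ES_nz. unfold z0; simpl; lra.
  - exists L. split; auto. apply (Ccv_shift _ _ N). exact HL2.
Qed.

Definition zk (v : R) (k : nat) : Cx := (INR k + 1, v).

Fixpoint GK (L : Cx) (v : R) (k : nat) : Cx :=
  match k with O => L | S k => Cmul (zk v k) (GK L v k) end.

Lemma ratio_cv z : 0 <= fst z ->
  Ccv (fun n => Cmul (RC (INR n)) (Cinv (Cadd z (RC (INR n + 1))))) (RC 1).
Proof.
  intro Hz. apply Ccv_of_mod. intros eps Heps.
  destruct (small_inv (Cmod (Cadd z (RC 1))) eps Heps) as [N HN]. exists N. intros n Hn.
  assert (Hq : Cadd z (RC (INR n + 1)) <> RC 0) by (apply Cnz_of_fst; unfold Cadd, RC; cbn [fst]; pose proof (pos_INR n); lra).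
  replace (Csub (Cmul (RC (INR n)) (Cinv (Cadd z (RC (INR n + 1))))) (RC 1))
    with (Copp (Cmul (Cadd z (RC 1)) (Cinv (Cadd z (RC (INR n + 1)))))) by (rewrite <- (Cadd_RC (INR n) 1) in *; field; auto).
  rewrite Cmod_opp, Cmod_mul, Cmod_inv by auto.
  eapply Rle_lt_trans; [|apply (HN n Hn)].
  assert (INR n + 1 <= Cmod (Cadd z (RC (INR n + 1)))).
  { pose proof (Cmod_fst (Cadd z (RC (INR n + 1)))). unfold Cadd at 1, RC at 1 in H. cbn [fst] in H.
    rewrite Rabs_pos_eq in H; pose proof (pos_INR n); lra. }
  pose proof (pos_INR n). pose proof (Cmod_ge0 (Cadd z (RC 1))).
  unfold Rdiv. apply Rmult_le_compat_l; auto. apply Rinv_le_contravar; lra.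
Qed.

Lemma GK_cv L v k : Ccv (ES (z0 v)) L -> Ccv (ES (zk v k)) (GK L v k).
Proof.
  intro H0. induction k.
  - replace (zk v 0) with (z0 v) by (unfold zk, z0; ceq; simpl; ring). exact H0.
  - simpl GK.
    assert (Ez : zk v (S k) = Cadd (zk v k) (RC 1)) by (unfold zk, Cadd, RC; apply Ceq; cbn [fst snd]; rewrite ?S_INR; ring).
    rewrite Ez.
    assert (Hpos : 0 < fst (zk v k)) by (unfold zk; simpl fst; pose proof (pos_INR k); lra).
    replace (Cmul (zk v k) (GK L v k)) with (Cmul (Cmul (zk v k) (GK L v k)) (RC 1)) by (ceq; ring).
    apply (Ccv_ext (fun n => Cmul (Cmul (zk v k) (ES (zk v k) n)) (Cmul (RC (INR n)) (Cinv (Cadd (zk v k) (RC (INR n + 1)))))) _ _ 1%nat).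
    + intros n Hn. symmetry. apply ES_succ_arg; auto.
    + apply Ccv_mul.
      * apply (Ccv_mul (fun _ => zk v k)); [apply Ccv_const|auto].
      * apply ratio_cv. lra.
Qed.

Lemma GK_lower L v k : Cmod L <= Cmod (GK L v k).
Proof.
  induction k; simpl GK; [lra|].
  rewrite Cmod_mul. assert (1 <= Cmod (zk v k)).
  { pose proof (Cmod_fst (zk v k)). change (fst (zk v k)) with (INR k + 1) in H. pose proof (pos_INR k).
    rewrite Rabs_pos_eq in H; lra. }
  pose proof (Cmod_ge0 (GK L v k)). nra.
Qed.

Lemma exp_series_cv X : Un_cv (sum_f_R0 (fun i => / INR (fact i) * X ^ i)) (exp X).
Proof. unfold exp. destruct (exist_exp X) as [l Hl]. simpl. exact Hl. Qed.

Lemma Csum_0 d : Csum d 0 = d 0%nat.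
Proof. reflexivity. Qed.

Lemma series_cv (d : nat -> Cx) M X : 0 <= M -> 0 <= X ->
  (forall k, Cmod (d k) <= M * (/ INR (fact k) * X ^ k)) ->
  exists g, Ccv (fun n => Csum d n) g /\ Cmod (Csub g (d 0%nat)) <= M * (exp X - 1).
Proof.
  intros HM HX Hd.
  set (A := sum_f_R0 (fun i => / INR (fact i) * X ^ i)).
  assert (HA : Un_cv A (exp X)) by apply exp_series_cv.
  assert (Hdiff : forall m k, Cmod (Csub (Csum d (k + m)) (Csum d m)) <= M * (A (k + m)%nat - A m)).
  { intros m k. induction k.
    - simpl. replace (Csub (Csum d m) (Csum d m)) with (RC 0) by (unfold Csub; ceq; ring).
      rewrite Cmod_RC, Rabs_R0. lra.
    - replace (S k + m)%nat with (S (k + m)) by lia. cbn [Csum]. unfold A. cbn [sum_f_R0]. fold A.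
      replace (Csub (Cadd (Csum d (k + m)) (d (S (k + m)))) (Csum d m))
        with (Cadd (Csub (Csum d (k + m)) (Csum d m)) (d (S (k + m)))) by (unfold Csub; ceq; ring).
      eapply Rle_trans; [apply Cmod_add|]. specialize (Hd (S (k+m))). lra. }
  assert (Hterm : forall k, 0 <= / INR (fact k) * X ^ k).
  { intro k. apply Rmult_le_pos. left; apply Rinv_0_lt_compat, lt_0_INR, lt_O_fact. apply pow_le; auto. }
  assert (Hgrow : Un_growing A). { intro n. unfold A; cbn [sum_f_R0]. specialize (Hterm (S n)). lra. }
  destruct (Ccv_cauchy (fun n => Csum d n)) as [g Hg].
  { intros eps Heps.
    destruct (CV_Cauchy A (exist _ _ HA) (eps / (M + 1))) as [N HN].
    { apply Rlt_gt. apply Rdiv_lt_0_compat; lra. }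
    exists N.
    assert (forall n m, (n >= N)%nat -> (m >= N)%nat -> (n >= m)%nat -> Cmod (Csub (Csum d n) (Csum d m)) < eps).
    { intros n m Hn Hm Hnm. replace n with ((n - m) + m)%nat by lia.
      eapply Rle_lt_trans; [apply Hdiff|].
      specialize (HN ((n - m) + m)%nat m ltac:(lia) Hm). unfold R_dist in HN.
      replace (n - m + m)%nat with n in * by lia.
      assert (A m <= A n).
      { replace n with ((n - m) + m)%nat by lia. clear -Hgrow. induction (n - m)%nat. simpl; lra.
        eapply Rle_trans; [apply IHn0|]. replace (S n0 + m)%nat with (S (n0 + m)) by lia. apply Hgrow. }
      rewrite Rabs_pos_eq in HN by lra.
      apply Rle_lt_trans with ((M+1) * (A n - A m)).
      - apply Rmult_le_compat_r; lra.
      - apply Rmult_lt_reg_l with (/ (M+1)). apply Rinv_0_lt_compat; lra.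
        rewrite <- Rmult_assoc, Rinv_l, Rmult_1_l by lra. unfold Rdiv in HN. rewrite Rmult_comm. lra. }
    intros n m Hn Hm. destruct (Compare_dec.le_lt_dec m n).
    - apply H; auto.
    - rewrite Cmod_sub_sym. apply H; auto; lia. }
  exists g. split; auto.
  apply (Ccv_mod_le _ _ _ _ 0%nat Hg). intros n _.
  rewrite <- Csum_0. replace n with (n + 0)%nat at 1 by lia.
  eapply Rle_trans; [apply Hdiff|]. replace (n + 0)%nat with n by lia.
  assert (A n <= exp X) by (apply growing_ineq; auto).
  assert (A 0%nat = 1) by (unfold A; simpl; field).
  apply Rmult_le_compat_l; lra.
Qed.

Definition bterm (a : Cx) (s : R) (k : nat) : Cx :=
  Cmul (RC ((-1) ^ k / INR (fact k)))
       (Cmul (Cinv (Cgamma (Cadd a (RC (INR k + 1))))) (Cpowr (s / 2) (Cadd a (RC (2 * INR k))))).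

Lemma BesselJ_bterm a s : BesselJ a s = Clim (fun n => Csum (bterm a s) n).
Proof. reflexivity. Qed.

Lemma exp_mul_nat k y : exp (INR k * y) = exp y ^ k.
Proof. induction k. simpl. rewrite Rmult_0_l, exp_0; auto.
  rewrite S_INR, Rmult_plus_distr_r, Rmult_1_l, exp_plus, IHk. simpl. ring. Qed.

Lemma Csum_conj d n : Csum (fun k => Cconj (d k)) n = Cconj (Csum d n).
Proof. induction n; cbn [Csum]; auto. rewrite IHn, conj_add; auto. Qed.

Lemma Csum_mul c d n : Csum (fun k => Cmul c (d k)) n = Cmul c (Csum d n).
Proof. induction n; cbn [Csum]; auto. rewrite IHn. ceq; ring. Qed.

Lemma bessel_struct v : 0 < v -> exists b0 M, b0 <> RC 0 /\ 0 <= M /\ forall s, exists g,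
  BesselJ (0, v) s = Cmul (Cexp (0, v * ln (s / 2))) g /\
  BesselJ (0, - v) s = Cconj (BesselJ (0, v) s) /\
  Cmod (Csub g b0) <= M * (exp (exp (2 * ln (s / 2))) - 1).
Proof.
  intro Hv. destruct (gamma0_exists v Hv) as [L [HL0 HL]].
  assert (Gp : forall k, Cgamma (Cadd (0, v) (RC (INR k + 1))) = GK L v k).
  { intro k. rewrite Cgamma_ES. apply Clim_eq.
    replace (Cadd (0, v) (RC (INR k + 1))) with (zk v k) by (unfold zk, Cadd, RC; apply Ceq; cbn [fst snd]; ring).
    apply GK_cv; auto. }
  assert (Gm : forall k, Cgamma (Cadd (0, - v) (RC (INR k + 1))) = Cconj (GK L v k)).
  { intro k. rewrite Cgamma_ES. apply Clim_eq.
    replace (Cadd (0, - v) (RC (INR k + 1))) with (Cconj (zk v k)) by (unfold zk, Cconj, Cadd, RC; apply Ceq; cbn [fst snd]; ring).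
    apply (Ccv_ext (fun n => Cconj (ES (zk v k) n))) with 0%nat.
    - intros; symmetry; apply ES_conj.
    - apply Ccv_conj, GK_cv; auto. }
  assert (GKnz : forall k, GK L v k <> RC 0).
  { intros k E. pose proof (GK_lower L v k). rewrite E, Cmod_RC, Rabs_R0 in H. pose proof (Cmod_pos _ HL0). lra. }
  exists (Cinv L), (/ Cmod L). split; [apply Cinv_nz; auto|]. split.
  { left. apply Rinv_0_lt_compat, Cmod_pos; auto. }
  intro s. set (l := ln (s / 2)). set (X := exp (2 * l)).
  set (d := fun k => Cmul (RC ((-1) ^ k / INR (fact k) * X ^ k)) (Cinv (GK L v k))).
  assert (Hterm : forall k, bterm (0, v) s k = Cmul (Cexp (0, v * l)) (d k)).
  { intro k. unfold bterm, d. rewrite Gp. unfold Cpowr. fold l.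
    replace (Cmul (Cadd (0, v) (RC (2 * INR k))) (RC l)) with (Cadd (INR k * (2 * l), 0) (0, v * l))
      by (unfold Cadd, RC, Cmul; apply Ceq; cbn [fst snd]; ring).
    rewrite Cexp_add, Cexp_real, exp_mul_nat. fold X. ceq; ring. }
  assert (Hconj : forall k, bterm (0, - v) s k = Cconj (bterm (0, v) s k)).
  { intro k. unfold bterm. rewrite Gp, Gm, !conj_mul, conj_RC, conj_inv, <- Cpowr_conj.
    do 3 f_equal. unfold Cconj, Cadd, RC; apply Ceq; cbn [fst snd]; ring. }
  destruct (series_cv d (/ Cmod L) X) as [g [Hg Hgb]].
  - left. apply Rinv_0_lt_compat, Cmod_pos; auto.
  - left; apply exp_pos.
  - intro k. unfold d. rewrite Cmod_mul, Cmod_RC, Cmod_inv by auto.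
    assert (Rabs ((-1) ^ k / INR (fact k) * X ^ k) = / INR (fact k) * X ^ k).
    { unfold Rdiv. rewrite !Rabs_mult, pow_1_abs, Rabs_pos_eq, (Rabs_pos_eq (X ^ k)).
      ring. apply pow_le; left; apply exp_pos. left; apply Rinv_0_lt_compat, lt_0_INR, lt_O_fact. }
    rewrite H. rewrite Rmult_comm. apply Rmult_le_compat_r.
    + apply Rmult_le_pos. left; apply Rinv_0_lt_compat, lt_0_INR, lt_O_fact. apply pow_le; left; apply exp_pos.
    + apply Rinv_le_contravar. apply Cmod_pos; auto. apply GK_lower.
  - exists g.
    assert (HJ : BesselJ (0, v) s = Cmul (Cexp (0, v * l)) g).
    { rewrite BesselJ_bterm. apply Clim_eq.
      apply (Ccv_ext (fun n => Cmul (Cexp (0, v * l)) (Csum d n))) with 0%nat.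
      - intros n _. rewrite <- Csum_mul. induction n; cbn [Csum]; rewrite ?IHn, ?Hterm; auto.
      - apply (Ccv_mul (fun _ => Cexp (0, v * l))); [apply Ccv_const|auto]. }
    split; [auto|]. split.
    + rewrite !BesselJ_bterm. apply Clim_eq.
      apply (Ccv_ext (fun n => Cconj (Csum (bterm (0, v) s) n))) with 0%nat.
      * intros n _. rewrite <- Csum_conj. induction n; cbn [Csum]; rewrite ?IHn, ?Hconj; auto.
      * apply Ccv_conj. rewrite <- BesselJ_bterm, HJ.
        apply (Ccv_ext (fun n => Cmul (Cexp (0, v * l)) (Csum d n))) with 0%nat.
        -- intros n _. rewrite <- Csum_mul. induction n; cbn [Csum]; rewrite ?IHn, ?Hterm; auto.
        -- apply (Ccv_mul (fun _ => Cexp (0, v * l))); [apply Ccv_const|auto].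
    + replace (Cinv L) with (d 0%nat); auto.
      unfold d. simpl GK. replace ((-1) ^ 0 / INR (fact 0) * X ^ 0) with 1 by (simpl; field). ceq; ring.
Qed.

Lemma exp_small X : 0 <= X <= 1/2 -> exp X - 1 <= 2 * X.
Proof.
  intro H. pose proof (exp_ineq1_le (-X)). rewrite exp_Ropp in H0.
  pose proof (exp_pos X).
  assert (1 - X <= / exp X) by lra.
  assert (exp X * (1 - X) <= 1).
  { apply Rmult_le_reg_l with (/ exp X). apply Rinv_0_lt_compat; lra.
    rewrite <- Rmult_assoc, Rinv_l, Rmult_1_l, Rmult_1_r by lra. lra. }
  nra.
Qed.

Lemma small_s v M th : 0 < v -> 0 <= M -> th <= 0 -> forall del, 0 < del ->
  exists s, 0 < s /\ Cexp (0, v * ln (s / 2)) = (cos th, sin th) /\ M * (exp (exp (2 * ln (s / 2))) - 1) < del.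
Proof.
  intros Hv HM Hth del Hdel.
  set (eta := Rmin (1/2) (del / (2 * M + 1))).
  assert (Heta : 0 < eta) by (unfold eta; apply Rmin_pos; [lra| apply Rdiv_lt_0_compat; lra]).
  destruct (INR_unbounded ((2 * th - v * ln eta) / (4 * PI))) as [n Hn].
  pose proof PI_RGT_0.
  set (y := (th - 2 * INR n * PI) / v).
  exists (2 * exp y). split; [pose proof (exp_pos y); lra|].
  replace (2 * exp y / 2) with (exp y) by field. rewrite ln_exp.
  split.
  - unfold Cexp; cbn [fst snd]. rewrite exp_0. replace (v * y) with (th - 2 * INR n * PI) by (unfold y; field; lra).
    rewrite <- (cos_period (th - 2 * INR n * PI) n), <- (sin_period (th - 2 * INR n * PI) n).
    replace (th - 2 * INR n * PI + 2 * INR n * PI) with th by ring. apply Ceq; cbn [fst snd]; ring.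
  - assert (HX : exp (2 * y) < eta).
    { rewrite <- (exp_ln eta) by auto. apply exp_increasing. unfold y.
      apply Rmult_lt_reg_l with v; auto. unfold Rdiv.
      replace (v * (2 * ((th - 2 * INR n * PI) * / v))) with (2 * th - 4 * PI * INR n) by (field; lra).
      apply Rmult_lt_compat_l with (r := 4 * PI) in Hn; [|lra].
      replace (4 * PI * ((2 * th - v * ln eta) / (4 * PI))) with (2 * th - v * ln eta) in Hn by (field; lra).
      lra. }
    pose proof (exp_pos (2 * y)).
    assert (eta <= 1/2) by apply Rmin_l. assert (eta <= del / (2 * M + 1)) by apply Rmin_r.
    pose proof (exp_small (exp (2 * y)) ltac:(lra)).
    apply Rle_lt_trans with (M * (2 * exp (2 * y))). apply Rmult_le_compat_l; auto.
    assert (M * (2 * exp (2 * y)) <= M * (2 * (del / (2 * M + 1)))) by (apply Rmult_le_compat_l; lra).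
    assert (M * (2 * (del / (2 * M + 1))) < del).
    { apply Rmult_lt_reg_r with (2 * M + 1); [lra|].
      replace (M * (2 * (del / (2 * M + 1))) * (2 * M + 1)) with (2 * M * del) by (field; lra). nra. }
    lra.
Qed.

Lemma Cmod_small_zero w : (forall eps, 0 < eps -> Cmod w <= eps) -> w = RC 0.
Proof.
  intro H. apply Cmod_eq0. pose proof (Cmod_ge0 w).
  destruct H0; auto. specialize (H (Cmod w / 2)). lra.
Qed.

Lemma indep v : 0 < v -> forall a b : Cx,
  (forall s, 0 < s -> Cadd (Cmul a (BesselJ (0, v) s)) (Cmul b (BesselJ (0, - v) s)) = RC 0) ->
  a = RC 0 /\ b = RC 0.
Proof.
  intros Hv a b Hab.
  destruct (bessel_struct v Hv) as [b0 [M [Hb0 [HM Hs]]]].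
  set (K := Cmod a + Cmod b + 1).
  assert (HK : 0 < K) by (unfold K; pose proof (Cmod_ge0 a); pose proof (Cmod_ge0 b); lra).
  assert (Key : forall th sg, th <= 0 -> (sg = 1 \/ sg = -1) ->
     (forall s g, Cexp (0, v * ln (s / 2)) = (cos th, sin th) ->
        Cadd (Cmul a (Cmul (Cexp (0, v * ln (s / 2))) g)) (Cmul b (Cconj (Cmul (Cexp (0, v * ln (s / 2))) g))) = RC 0 ->
        Cadd (Cmul a g) (Cmul (RC sg) (Cmul b (Cconj g))) = RC 0) ->
     Cadd (Cmul a b0) (Cmul (RC sg) (Cmul b (Cconj b0))) = RC 0).
  { intros th sg Hth Hsg Hphase. apply Cmod_small_zero. intros eps Heps.
    destruct (small_s v M th Hv HM Hth (eps / K)) as [s [Hs0 [Hph Hsm]]]; [apply Rdiv_lt_0_compat; lra|].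
    destruct (Hs s) as [g [HJ [HJm Hg]]].
    specialize (Hab s Hs0). rewrite HJm, HJ in Hab.
    specialize (Hphase s g Hph Hab).
    replace (Cadd (Cmul a b0) (Cmul (RC sg) (Cmul b (Cconj b0))))
      with (Csub (Cadd (Cmul a b0) (Cmul (RC sg) (Cmul b (Cconj b0)))) (Cadd (Cmul a g) (Cmul (RC sg) (Cmul b (Cconj g)))))
      by (rewrite Hphase; unfold Csub; ceq; ring).
    replace (Csub (Cadd (Cmul a b0) (Cmul (RC sg) (Cmul b (Cconj b0)))) (Cadd (Cmul a g) (Cmul (RC sg) (Cmul b (Cconj g)))))
      with (Cadd (Cmul a (Copp (Csub g b0))) (Cmul (RC sg) (Cmul b (Cconj (Copp (Csub g b0))))))
      by (unfold Csub; ceq; ring).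
    eapply Rle_trans; [apply Cmod_add|]. rewrite !Cmod_mul, Cmod_RC, Cmod_conj, Cmod_opp.
    assert (Rabs sg = 1) by (destruct Hsg; subst; [apply Rabs_R1| rewrite Rabs_left; lra]).
    rewrite H. pose proof (Cmod_ge0 a). pose proof (Cmod_ge0 b). pose proof (Cmod_ge0 (Csub g b0)).
    assert (Cmod (Csub g b0) <= eps / K) by lra.
    assert (K * (eps / K) = eps) by (field; lra).
    assert ((Cmod a + Cmod b) * Cmod (Csub g b0) <= K * (eps / K)).
    { apply Rmult_le_compat; try lra. unfold K; lra. }
    nra. }
  assert (E1 : Cadd (Cmul a b0) (Cmul (RC 1) (Cmul b (Cconj b0))) = RC 0).
  { apply (Key 0); [lra|left; auto|]. intros s g Hph H. rewrite Hph, cos_0, sin_0 in H.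
    rewrite <- H. ceq; ring. }
  assert (E2 : Cadd (Cmul a b0) (Cmul (RC (-1)) (Cmul b (Cconj b0))) = RC 0).
  { apply (Key (- (PI / 2))); [pose proof PI_RGT_0; lra|right; auto|]. intros s g Hph H.
    rewrite Hph, cos_neg, sin_neg, cos_PI2, sin_PI2 in H.
    replace (Cadd (Cmul a g) (Cmul (RC (-1)) (Cmul b (Cconj g)))) with
      (Cmul (0, 1) (Cadd (Cmul a (Cmul (0, - 1) g)) (Cmul b (Cconj (Cmul (0, - 1) g))))) by (ceq; ring).
    replace (- 0) with 0 in H by ring.
    transitivity (Cmul (0, 1) (RC 0)); [f_equal; exact H| ceq; ring]. }
  assert (Ha : Cmul a b0 = RC 0).
  { replace (Cmul a b0) with (Cmul (RC (/2)) (Cadd (Cadd (Cmul a b0) (Cmul (RC 1) (Cmul b (Cconj b0))))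
       (Cadd (Cmul a b0) (Cmul (RC (-1)) (Cmul b (Cconj b0)))))) by (ceq; field).
    rewrite E1, E2. ceq; ring. }
  assert (Hb0c : Cconj b0 <> RC 0) by (intro E; apply Hb0; rewrite <- (conj_conj b0), E; ceq; ring).
  assert (HA : a = RC 0).
  { replace a with (Cmul (Cmul a b0) (Cinv b0)) by (field; auto). rewrite Ha. ceq; ring. }
  split; auto.
  rewrite HA in E1.
  replace b with (Cmul (Cadd (Cmul (RC 0) b0) (Cmul (RC 1) (Cmul b (Cconj b0)))) (Cinv (Cconj b0))) by (field; auto).
  rewrite E1. ceq; ring.
Qed.

Lemma eph r : Cexp (Cmul Ci (RC r)) = (cos r, sin r).
Proof. unfold Cexp, Cmul, Ci, RC; cbn [fst snd].
  replace (0 * r - 1 * 0) with 0 by ring. replace (0 * 0 + 1 * r) with r by ring.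
  rewrite exp_0. apply Ceq; cbn [fst snd]; ring. Qed.

Lemma norm3_neg p : norm3 (neg3 p) = norm3 p.
Proof. unfold norm3, dot3, neg3; cbn [fst snd]. f_equal. ring. Qed.
Lemma dot3_neg_r x p : dot3 x (neg3 p) = - dot3 x p.
Proof. unfold dot3, neg3; cbn [fst snd]. ring. Qed.
Lemma dot3_neg_l x p : dot3 (neg3 x) p = - dot3 x p.
Proof. unfold dot3, neg3; cbn [fst snd]. ring. Qed.

Lemma phase_T w : Cexp (Cmul (RC PI) (Cmul Ci (0, w))) = RC (exp (- (PI * w))).
Proof. replace (Cmul (RC PI) (Cmul Ci (0, w))) with (- (PI * w), 0) by (unfold Cmul, Ci, RC; apply Ceq; cbn [fst snd]; ring).
  apply Cexp_real. Qed.

Lemma phase_3 : Cexp (0, 3 / 2 * PI) = (0, -1).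
Proof. unfold Cexp; cbn [fst snd]. replace (3/2*PI) with (3 * (PI/2)) by field.
  rewrite cos_3PI2, sin_3PI2, exp_0. apply Ceq; cbn [fst snd]; ring. Qed.

Section Fields.
Variables (omega v : R) (c : Cx * Cx) (p : R3) (t : R) (x : R3).
Let K' := Knorm omega v * Rpower (- omega * t) (3 / 2).
Let s := - norm3 p * t.
Let d := dot3 x p.
Let J := BesselJ (0, v) s.
Hypothesis HJm : BesselJ (0, - v) s = Cconj J.

Lemma fc_eq : fc omega v c p t x = Cmul (RC K') (Cmul (cos d, sin d) (Cadd (Cmul (fst c) J) (Cmul (snd c) (Cconj J)))).
Proof.
  unfold fc, ustar_neg, u, mode. rewrite norm3_neg, dot3_neg_r, !eph.
  fold s d J. unfold K'. rewrite cos_neg, sin_neg.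
  unfold Cconj, Cmul, Cadd, RC; apply Ceq; cbn [fst snd]; ring.
Qed.

Lemma pct_eq : PCT_fc omega v c p t x = Cmul (RC K') (Cmul (cos d, sin d) (Cmul (0, 1)
   (Cadd (Cmul (RC (exp (- (PI * v)))) (Cmul (Cconj (fst c)) (Cconj J)))
         (Cmul (RC (exp (PI * v))) (Cmul (Cconj (snd c)) J))))).
Proof.
  unfold PCT_fc, Pop, Cop, T_fc, modeT, mode. rewrite dot3_neg_l, !eph, phase_3, !phase_T.
  fold s d J. rewrite HJm. unfold K'. rewrite cos_neg, sin_neg.
  replace (- (PI * - v)) with (PI * v) by ring.
  unfold Cconj, Cmul, Cadd, RC; apply Ceq; cbn [fst snd]; ring.
Qed.
End Fields.

Lemma sinh_pos y : 0 < y -> 0 < sinh y.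
Proof. intro H. unfold sinh. assert (exp (-y) < exp y) by (apply exp_increasing; lra). lra. Qed.

Lemma Kpos omega v t : 0 < omega -> 0 < v -> t < 0 -> 0 < Knorm omega v * Rpower (- omega * t) (3 / 2).
Proof.
  intros Ho Hv Ht. unfold Knorm, Rpower. pose proof PI_RGT_0.
  assert (0 < sqrt (PI / omega)) by (apply sqrt_lt_R0; apply Rdiv_lt_0_compat; lra).
  assert (0 < sqrt (2 * sinh (PI * v))) by (apply sqrt_lt_R0; pose proof (sinh_pos (PI * v)); nra).
  pose proof (exp_pos (- (3 / 2) * ln (2 * PI))). pose proof (exp_pos (3 / 2 * ln (- omega * t))).
  apply Rmult_lt_0_compat; auto. apply Rmult_lt_0_compat; auto. apply Rdiv_lt_0_compat; auto.
Qed.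

Lemma ph_nz d : (cos d, sin d) <> RC 0.
Proof. intro E. injection E. intros. pose proof (sin2_cos2 d). unfold Rsqr in H1. rewrite H, H0 in H1. lra. Qed.

Definition alpha v (c : Cx * Cx) eta := Csub (Cmul (0, 1) (Cmul (RC (exp (PI * v))) (Cconj (snd c)))) (Cmul eta (fst c)).
Definition beta v (c : Cx * Cx) eta := Csub (Cmul (0, 1) (Cmul (RC (exp (- (PI * v)))) (Cconj (fst c)))) (Cmul eta (snd c)).

Lemma eig_iff omega v c eta : 0 < omega -> 0 < v ->
  ((forall (p : R3) (t : R) (x : R3), t < 0 -> PCT_fc omega v c p t x = Cmul eta (fc omega v c p t x))
   <-> (alpha v c eta = RC 0 /\ beta v c eta = RC 0)).
Proof.
  intros Ho Hv.
  destruct (bessel_struct v Hv) as [b0 [M [_ [_ Hs]]]].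
  assert (HJm : forall s, BesselJ (0, - v) s = Cconj (BesselJ (0, v) s)) by (intro s; destruct (Hs s) as [g [_ [H _]]]; auto).
  assert (Id : forall K ph J, Cmul (RC K) (Cmul ph (Cmul (0, 1)
   (Cadd (Cmul (RC (exp (- (PI * v)))) (Cmul (Cconj (fst c)) (Cconj J)))
         (Cmul (RC (exp (PI * v))) (Cmul (Cconj (snd c)) J))))) =
      Cadd (Cmul eta (Cmul (RC K) (Cmul ph (Cadd (Cmul (fst c) J) (Cmul (snd c) (Cconj J))))))
           (Cmul (RC K) (Cmul ph (Cadd (Cmul (alpha v c eta) J) (Cmul (beta v c eta) (Cconj J)))))).
  { intros. unfold alpha, beta, Csub. ring. }
  split.
  - intro Heig. apply (indep v Hv). intros s Hs0.
    set (p0 := ((1, 0), 0) : R3).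
    assert (Hn : norm3 p0 = 1) by (unfold norm3, dot3, p0; cbn [fst snd]; replace (1 * 1 + 0 * 0 + 0 * 0) with 1 by ring; apply sqrt_1).
    specialize (Heig p0 (- s) p0 ltac:(lra)).
    rewrite (pct_eq omega v c p0 (- s) p0 (HJm _)), (fc_eq omega v c p0 (- s) p0), Id in Heig.
    replace (- norm3 p0 * - s) with s in Heig by (rewrite Hn; ring).
    rewrite HJm.
    set (K := Knorm omega v * Rpower (- omega * - s) (3 / 2)) in Heig.
    set (ph := (cos (dot3 p0 p0), sin (dot3 p0 p0))) in Heig.
    assert (HK : RC K <> RC 0) by (apply Cnz_of_fst; simpl; pose proof (Kpos omega v (-s) Ho Hv ltac:(lra)); unfold K; lra).
    assert (Hph : ph <> RC 0) by apply ph_nz.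
    set (Z := Cadd (Cmul (alpha v c eta) (BesselJ (0, v) s)) (Cmul (beta v c eta) (Cconj (BesselJ (0, v) s)))) in *.
    set (Y := Cmul eta (Cmul (RC K) (Cmul ph (Cadd (Cmul (fst c) (BesselJ (0, v) s)) (Cmul (snd c) (Cconj (BesselJ (0, v) s))))))) in *.
    assert (Cmul (RC K) (Cmul ph Z) = RC 0).
    { transitivity (Csub (Cadd Y (Cmul (RC K) (Cmul ph Z))) Y); [unfold Csub; ring|].
      rewrite Heig. unfold Csub; ring. }
    replace Z with (Cmul (Cinv ph) (Cmul (Cinv (RC K)) (Cmul (RC K) (Cmul ph Z)))) by (field; auto).
    rewrite H. ring.
  - intros [Ha Hb] p t x Ht.
    rewrite (pct_eq omega v c p t x (HJm _)), (fc_eq omega v c p t x), Id, Ha, Hb. ring.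
Qed.

Lemma polar z : exists th, z = (sqrt (Cnorm2 z) * cos th, sqrt (Cnorm2 z) * sin th).
Proof.
  destruct (Req_dec (Cnorm2 z) 0) as [E|E].
  - exists 0. rewrite E, sqrt_0. unfold Cnorm2 in E. apply Ceq; cbn [fst snd]; nra.
  - destruct z as [x y]. unfold Cnorm2 in *; cbn [fst snd] in *.
    set (r := sqrt (x ^ 2 + y ^ 2)).
    assert (Hr : 0 < r) by (apply sqrt_lt_R0; assert (0 <= x^2) by nra; assert (0 <= y^2) by nra; lra).
    assert (Hr2 : r * r = x^2 + y^2) by (apply sqrt_sqrt; nra).
    assert (Hb : -1 <= x / r <= 1).
    { split; apply Rmult_le_reg_r with r; auto; unfold Rdiv; rewrite Rmult_assoc, Rinv_l by lra; nra. }
    assert (Hs : sqrt (1 - (x / r)²) = Rabs (y / r)).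
    { rewrite <- sqrt_Rsqr_abs. f_equal.
      assert (E1 : 1 = (x^2+y^2)/(r*r)) by (rewrite Hr2; field; nra).
      rewrite E1. unfold Rsqr. field. lra. }
    destruct (Rle_dec 0 y).
    + exists (acos (x / r)).
      assert (0 <= y / r) by (apply Rmult_le_pos; [lra|left; apply Rinv_0_lt_compat; lra]).
      rewrite cos_acos, sin_acos, Hs, Rabs_pos_eq by auto.
      apply Ceq; cbn [fst snd]; field; lra.
    + exists (- acos (x / r)).
      assert (y / r < 0) by (apply Rmult_lt_reg_r with r; auto; unfold Rdiv; rewrite Rmult_assoc, Rinv_l by lra; lra).
      rewrite cos_neg, sin_neg, cos_acos, sin_acos, Hs, Rabs_left by auto.
      apply Ceq; cbn [fst snd]; field; lra.
Qed.

Lemma Cexp_per r y : Cexp (r, y + 2 * INR 1 * PI) = Cexp (r, y).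
Proof. unfold Cexp; cbn [fst snd]. rewrite cos_period, sin_period. reflexivity. Qed.

Lemma i_exp : ((0, 1) : Cx) = Cexp (0, PI / 2).
Proof. unfold Cexp; cbn [fst snd]. rewrite cos_PI2, sin_PI2, exp_0. apply Ceq; cbn [fst snd]; ring. Qed.

Lemma conj_kexp k w : Cconj (Cmul (RC k) (Cexp w)) = Cmul (RC k) (Cexp (Cconj w)).
Proof. rewrite conj_mul, conj_RC, Cexp_conj. reflexivity. Qed.

Section Alg.
Variables (v : R) (c : Cx * Cx).
Hypothesis Hv : 0 < v.
Let k := / sqrt (2 * sinh (PI * v)).
Let a := PI * v / 2.

Definition eta0 (t1 t2 : R) : Cx := Cexp (0, - (t1 + t2 + 3 / 2 * PI)).

Lemma form_eig t1 t2 :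
  fst c = Cmul (RC k) (Cexp (PI * v / 2, t1)) ->
  snd c = Cmul (RC k) (Cexp (- (PI * v / 2), t2)) ->
  alpha v c (eta0 t1 t2) = RC 0 /\ beta v c (eta0 t1 t2) = RC 0.
Proof.
  intros H1 H2. unfold alpha, beta, eta0. rewrite H1, H2, !conj_kexp, i_exp, <- !Cexp_real.
  split.
  - transitivity (Cmul (RC k) (Csub (Cexp (Cadd (Cadd (0, PI / 2) (PI * v, 0)) (Cconj (- (PI * v / 2), t2))))
                                  (Cexp (Cadd (0, - (t1 + t2 + 3 / 2 * PI)) (PI * v / 2, t1))))).
    + rewrite !Cexp_add. unfold Csub. ring.
    + replace (Cadd (Cadd (0, PI / 2) (PI * v, 0)) (Cconj (- (PI * v / 2), t2)))
        with ((PI * v / 2, (- t2 - 3 / 2 * PI) + 2 * INR 1 * PI) : Cx) by (unfold Cadd, Cconj; apply Ceq; cbn [fst snd]; simpl INR; field).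
      replace (Cadd (0, - (t1 + t2 + 3 / 2 * PI)) (PI * v / 2, t1)) with ((PI * v / 2, - t2 - 3 / 2 * PI) : Cx)
        by (unfold Cadd; apply Ceq; cbn [fst snd]; ring).
      rewrite Cexp_per. unfold Csub. ring.
  - transitivity (Cmul (RC k) (Csub (Cexp (Cadd (Cadd (0, PI / 2) (- (PI * v), 0)) (Cconj (PI * v / 2, t1))))
                                  (Cexp (Cadd (0, - (t1 + t2 + 3 / 2 * PI)) (- (PI * v / 2), t2))))).
    + rewrite !Cexp_add. unfold Csub. ring.
    + replace (Cadd (Cadd (0, PI / 2) (- (PI * v), 0)) (Cconj (PI * v / 2, t1)))
        with ((- (PI * v / 2), (- t1 - 3 / 2 * PI) + 2 * INR 1 * PI) : Cx) by (unfold Cadd, Cconj; apply Ceq; cbn [fst snd]; simpl INR; field).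
      replace (Cadd (0, - (t1 + t2 + 3 / 2 * PI)) (- (PI * v / 2), t2)) with ((- (PI * v / 2), - t1 - 3 / 2 * PI) : Cx)
        by (unfold Cadd; apply Ceq; cbn [fst snd]; ring).
      rewrite Cexp_per. unfold Csub. ring.
Qed.

Lemma k_pos : 0 < k.
Proof. unfold k. apply Rinv_0_lt_compat, sqrt_lt_R0. pose proof (sinh_pos (PI * v)). pose proof PI_RGT_0.
  assert (0 < PI * v) by nra. specialize (H H1). lra. Qed.

Lemma form_unique t1 t2 eta :
  fst c = Cmul (RC k) (Cexp (PI * v / 2, t1)) ->
  alpha v c eta = RC 0 -> alpha v c (eta0 t1 t2) = RC 0 -> eta = eta0 t1 t2.
Proof.
  intros H1 Ha Ha0.
  assert (Hc1 : fst c <> RC 0) by (rewrite H1; apply Cmul_nz; [apply Cnz_of_fst; simpl; pose proof k_pos; lra|apply Cexp_nz]).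
  unfold alpha in *.
  assert (Cmul eta (fst c) = Cmul (eta0 t1 t2) (fst c)).
  { transitivity (Csub (Cmul (0, 1) (Cmul (RC (exp (PI * v))) (Cconj (snd c)))) (Csub (Cmul (0, 1) (Cmul (RC (exp (PI * v))) (Cconj (snd c)))) (Cmul eta (fst c)))); [unfold Csub; ring|].
    rewrite Ha, <- Ha0. unfold Csub; ring. }
  replace eta with (Cmul (Cmul eta (fst c)) (Cinv (fst c))) by (field; auto).
  rewrite H. field. auto.
Qed.

Lemma Cnorm2_mul z w : Cnorm2 (Cmul z w) = Cnorm2 z * Cnorm2 w.
Proof. unfold Cnorm2, Cmul; cbn [fst snd]. ring. Qed.

Lemma eig_form eta :
  Cnorm2 (fst c) - Cnorm2 (snd c) = 1 ->
  alpha v c eta = RC 0 -> beta v c eta = RC 0 ->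
  exists t1 t2, fst c = Cmul (RC k) (Cexp (PI * v / 2, t1)) /\ snd c = Cmul (RC k) (Cexp (- (PI * v / 2), t2)).
Proof.
  intros HN Ha Hb.
  set (q := exp (PI * v)). set (r := exp (- (PI * v))).
  assert (Hqr : q * r = 1) by (unfold q, r; rewrite <- exp_plus; replace (PI * v + - (PI * v)) with 0 by ring; apply exp_0).
  assert (Hq : 0 < q) by apply exp_pos. assert (Hr : 0 < r) by apply exp_pos.
  assert (Hq1 : 1 < q) by (unfold q; rewrite <- exp_0; apply exp_increasing; pose proof PI_RGT_0; nra).
  unfold alpha, beta in *.
  assert (E1 : Cmul eta (fst c) = Cmul (0, 1) (Cmul (RC q) (Cconj (snd c)))).
  { transitivity (Csub (Cmul (0, 1) (Cmul (RC q) (Cconj (snd c)))) (Csub (Cmul (0, 1) (Cmul (RC q) (Cconj (snd c)))) (Cmul eta (fst c)))); [unfold Csub; ring|].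
    fold q in Ha. rewrite Ha. unfold Csub; ring. }
  assert (E2 : Cmul eta (snd c) = Cmul (0, 1) (Cmul (RC r) (Cconj (fst c)))).
  { transitivity (Csub (Cmul (0, 1) (Cmul (RC r) (Cconj (fst c)))) (Csub (Cmul (0, 1) (Cmul (RC r) (Cconj (fst c)))) (Cmul eta (snd c)))); [unfold Csub; ring|].
    fold r in Hb. rewrite Hb. unfold Csub; ring. }
  apply (f_equal Cnorm2) in E1. apply (f_equal Cnorm2) in E2.
  rewrite !Cnorm2_mul in E1, E2.
  assert (Nc : forall z, Cnorm2 (Cconj z) = Cnorm2 z) by (intro; unfold Cnorm2, Cconj; cbn [fst snd]; ring).
  assert (Ni : Cnorm2 (0, 1) = 1) by (unfold Cnorm2; cbn [fst snd]; ring).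
  assert (NR : forall x, Cnorm2 (RC x) = x ^ 2) by (intro; unfold Cnorm2, RC; cbn [fst snd]; ring).
  rewrite !Nc, Ni, !NR in *.
  set (ne := Cnorm2 eta) in *. set (N1 := Cnorm2 (fst c)) in *. set (N2 := Cnorm2 (snd c)) in *.
  assert (Hne : 0 <= ne) by (unfold ne, Cnorm2; nra).
  assert (HN2 : 0 <= N2) by (unfold N2, Cnorm2; nra).
  assert (HN2p : 0 < N2).
  { destruct HN2 as [|E]; auto. rewrite <- E in *. assert (ne = 0) by nra. rewrite H in E2.
    assert (r ^ 2 * N1 = 0) by lra. assert (0 < r^2) by nra. nra. }
  assert (Hne1 : ne = 1).
  { assert (ne * ne * N1 * N2 = (q * r) ^ 2 * N1 * N2) by (replace (ne * ne * N1 * N2) with ((ne * N1) * (ne * N2)) by ring; rewrite E1, E2; ring).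
    rewrite Hqr in H. assert (0 < N1 * N2) by nra. assert (ne * ne = 1) by nra. nra. }
  rewrite Hne1 in E1.
  assert (HN2v : N2 = (k * exp (- (PI * v / 2))) ^ 2).
  { assert (Hk2 : k ^ 2 = / (q - r)).
    { unfold k. rewrite pow_inv. f_equal. rewrite <- Rsqr_pow2, Rsqr_sqrt. unfold sinh; fold q r; field.
      pose proof (sinh_pos (PI * v)). pose proof PI_RGT_0. assert (0 < PI * v) by nra. specialize (H H1). lra. }
    assert (He : exp (- (PI * v / 2)) ^ 2 = r) by (unfold r; simpl; rewrite Rmult_1_r, <- exp_plus; f_equal; field).
    rewrite Rpow_mult_distr, Hk2, He.
    assert (N2 * (q * q - 1) = 1) by nra.
    apply Rmult_eq_reg_r with (q * q - 1); [|nra]. rewrite H. field_simplify; [|nra].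
    replace (q ^ 2 * r - r) with (q - r) by (replace (q^2*r) with ((q*r)*q) by ring; rewrite Hqr; ring). field. nra. }
  assert (HN1v : N1 = (k * exp (PI * v / 2)) ^ 2).
  { assert (Hk2 : k ^ 2 = / (q - r)).
    { unfold k. rewrite pow_inv. f_equal. rewrite <- Rsqr_pow2, Rsqr_sqrt. unfold sinh; fold q r; field.
      pose proof (sinh_pos (PI * v)). pose proof PI_RGT_0. assert (0 < PI * v) by nra. specialize (H H1). lra. }
    assert (He : exp (PI * v / 2) ^ 2 = q) by (unfold q; simpl; rewrite Rmult_1_r, <- exp_plus; f_equal; field).
    rewrite Rpow_mult_distr, Hk2, He.
    assert (N1 = q^2 * N2) by lra. rewrite H, HN2v, Rpow_mult_distr, Hk2.
    assert (He' : exp (- (PI * v / 2)) ^ 2 = r) by (unfold r; simpl; rewrite Rmult_1_r, <- exp_plus; f_equal; field).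
    rewrite He'. field_simplify; [|nra|nra]. replace (q^2 * r) with (q * (q * r)) by ring. rewrite Hqr. field. nra. }
  destruct (polar (fst c)) as [t1 Ht1]. destruct (polar (snd c)) as [t2 Ht2].
  exists t1, t2. fold N1 in Ht1. fold N2 in Ht2.
  pose proof k_pos. pose proof (exp_pos (PI * v / 2)). pose proof (exp_pos (- (PI * v / 2))).
  rewrite HN1v, sqrt_pow2 in Ht1 by nra. rewrite HN2v, sqrt_pow2 in Ht2 by nra.
  split.
  - rewrite Ht1. unfold Cexp, Cmul, RC; apply Ceq; cbn [fst snd]; ring.
  - rewrite Ht2. unfold Cexp, Cmul, RC; apply Ceq; cbn [fst snd]; ring.
Qed.
End Alg.

Theorem corollary4 (omega m lambda : R) (c : Cx * Cx) :
  0 < omega -> 0 < lambda -> lambda < mu m omega ->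
  cdot c c = RC 1 ->
  let v := nu m omega lambda in
  ((exists eta : Cx, forall (p : R3) (t : R) (x : R3), t < 0 ->
        PCT_fc omega v c p t x = Cmul eta (fc omega v c p t x))
   <->
   (exists theta1 theta2 : R,
        fst c = Cmul (RC (/ sqrt (2 * sinh (PI * v)))) (Cexp (PI * v / 2, theta1)) /\
        snd c = Cmul (RC (/ sqrt (2 * sinh (PI * v)))) (Cexp (- (PI * v / 2), theta2))))
  /\
  (forall theta1 theta2 : R,
        fst c = Cmul (RC (/ sqrt (2 * sinh (PI * v)))) (Cexp (PI * v / 2, theta1)) ->
        snd c = Cmul (RC (/ sqrt (2 * sinh (PI * v)))) (Cexp (- (PI * v / 2), theta2)) ->
        forall eta : Cx,
          (forall (p : R3) (t : R) (x : R3), t < 0 ->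
              PCT_fc omega v c p t x = Cmul eta (fc omega v c p t x))
          <-> eta = Cexp (0, - (theta1 + theta2 + 3 / 2 * PI))).
Proof.
  intros Ho Hl Hm Hcc v.
  assert (Hv : 0 < v) by (unfold v, nu; apply sqrt_lt_R0; nra).
  assert (HN : Cnorm2 (fst c) - Cnorm2 (snd c) = 1).
  { apply (f_equal fst) in Hcc. unfold cdot, Cadd, Cmul, Copp, Cconj, RC in Hcc; cbn [fst snd] in Hcc.
    unfold Cnorm2. rewrite <- Hcc. ring. }
  split.
  - split.
    + intros [eta Heig]. apply (eig_iff omega v c eta Ho Hv) in Heig. destruct Heig as [Ha Hb].
      apply (eig_form v c Hv eta HN); auto.
    + intros [t1 [t2 [H1 H2]]]. exists (eta0 t1 t2). apply eig_iff; auto. apply form_eig; auto.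
  - intros t1 t2 H1 H2 eta. rewrite (eig_iff omega v c eta Ho Hv). split.
    + intros [Ha Hb]. apply (form_unique v c Hv t1 t2 eta H1 Ha). apply form_eig; auto.
    + intros ->. apply form_eig; auto.
Qed.
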